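(* Let $N$ be a natural number, $P=\{a\subseteq N: |a|\geq 2\}$, and let $\|\cdot\|_3$ be the graph coloring norm on subsets of $P$ (defined in the context). Let $n$ be a natural number and $A\subseteq P$. If $A$ cannot be split by $2^n$ sets, then $\|A\|_3>n$.
   Context: $N=\{0,\ldots,N-1\}$. For $A\subseteq P$ and $z\subseteq N$ let $A\restriction z=\{a\in A: a\subseteq z\}$. The relation ''$\|A\|_3\geq m$'' is defined recursively: $\|A\|_3\geq 0$ always; $\|A\|_3\geq 1$ iff $A\neq\emptyset$; for $m\geq 1$, $\|A\|_3\geq m+1$ iff for every $z\subseteq N$ either $\|A\restriction z\|_3\geq m$ or $\|A\restriction(N\setminus z)\|_3\geq m$. Then $\|A\|_3$ is the largest $m$ with $\|A\|_3\geq m$. $A$ is split by sets $V_0,\ldots,V_{c-1}$ (pairwise disjoint, possibly empty, with union $N$) if $A\restriction V_j=\emptyset$ for every $j<c$; $A$ can be split by $c$ sets if such a partition of $N$ into $c$ sets exists. *)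

(* Defs.v *)
From mathcomp Require Import all_boot all_order.
Set Implicit Arguments. Unset Strict Implicit. Unset Printing Implicit Defensive.

(* The ground set N = {0,...,N-1} is the finite type 'I_N; subsets are {set 'I_N}. *)

Definition Pset (N : nat) : {set {set 'I_N}} := [set a : {set 'I_N} | 1 < #|a|].

Definition restr (N : nat) (A : {set {set 'I_N}}) (z : {set 'I_N}) : {set {set 'I_N}} :=
  [set a in A | a \subset z].

(* norm3_ge A m  <=>  ||A||_3 >= m, by the recursive definition of the paper. *)
Fixpoint norm3_ge (N : nat) (A : {set {set 'I_N}}) (m : nat) {struct m} : bool :=
  match m with
  | 0 => true
  | 1 => A != set0
  | m'.+1 => [forall z : {set 'I_N},
                norm3_ge (restr A z) m' || norm3_ge (restr A (~: z)) m']
  end.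

(* A is split by the sets V_0,...,V_{c-1} (pairwise disjoint, union N): encoded
   by the map f : 'I_N -> 'I_c with V_j = f^{-1}(j); A |` V_j is empty for all j. *)
Definition split_by (N c : nat) (A : {set {set 'I_N}}) (f : 'I_N -> 'I_c) : Prop :=
  forall j : 'I_c, restr A [set x | f x == j] = set0.

Definition can_be_split (N c : nat) (A : {set {set 'I_N}}) : Prop :=
  exists f : 'I_N -> 'I_c, split_by A f.

(* Main.v *)
Require Import Defs.
From mathcomp Require Import all_boot all_order.

Lemma key (N n : nat) (A : {set {set 'I_N}}) :
  ~~ norm3_ge A n.+1 -> exists f : 'I_N -> 'I_(2 ^ n), split_by A f.
Proof.
elim: n A => [|n IH] A.
  move/negbNE/eqP => ->.
  have h0 : 0 < 2 ^ 0 by [].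
  exists (fun _ => Ordinal h0) => j.
  by apply/setP => a; rewrite inE in_set0.
rewrite [norm3_ge _ _]/=.
move/forallPn => [z]; rewrite negb_or => /andP [h1 h2].
have [f1 H1] := IH _ h1; have [f2 H2] := IH _ h2.
have lt : forall x, (if x \in z then val (f1 x) else 2 ^ n + f2 x) < 2 ^ n.+1.
  move=> x; rewrite expnS mul2n -addnn; case: ifP => _.
    by apply: ltn_addr; apply: ltn_ord.
  by rewrite ltn_add2l.
exists (fun x => Ordinal (lt x)) => j.
apply/setP => a; rewrite !inE; apply/negbTE/andP => [[aA sub]].
case: (ltnP j (2 ^ n)) => hj.
  have hz : forall x, x \in a -> (x \in z) /\ (f1 x == Ordinal hj).
    move=> x xa; have := subsetP sub x xa; rewrite inE => /eqP/(congr1 val) /=.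
    case: ifP => xz e.
      by split => //; apply/eqP/val_inj.
    exfalso; by have := hj; rewrite -e ltnNge leq_addr.
  have : a \in restr (restr A z) [set x | f1 x == Ordinal hj].
    rewrite !inE aA /=; apply/andP; split; apply/subsetP => x xa;
      have [? ?] := hz x xa; by rewrite ?inE.
  by rewrite H1 in_set0.
have hj' : j - 2 ^ n < 2 ^ n.
  by rewrite ltn_subLR // addnn -mul2n -expnS.
have hz : forall x, x \in a -> (x \notin z) /\ (f2 x == Ordinal hj').
  move=> x xa; have := subsetP sub x xa; rewrite inE => /eqP/(congr1 val) /=.
  case: ifP => xz e.
    exfalso; by have := hj; rewrite -e leqNgt (ltn_ord (f1 x)).
  by split => //; apply/eqP/val_inj => /=; rewrite -e addKn.
have : a \in restr (restr A (~: z)) [set x | f2 x == Ordinal hj'].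
  rewrite !inE aA /=; apply/andP; split; apply/subsetP => x xa;
    have [? ?] := hz x xa; by rewrite ?inE.
by rewrite H2 in_set0.
Qed.

Theorem theorem5p11 (N n : nat) (A : {set {set 'I_N}}) :
  A \subset Pset N ->
  ~ can_be_split (2 ^ n) A ->
  norm3_ge A n.+1.
Proof.
move=> _ ns; apply/negPn/negP => h.
by apply: ns; apply: key h.
Qed.
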